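(* Let $R$ be an axis-parallel rectangle of height $h$, $\rho>0$, and $t=\lceil h/(\sqrt3\rho)\rceil$. For every vertical line $\lambda$ there is a set of $2t$ points such that for every axis-parallel line segment $\ell\subset R$ whose hippodrome $H(\ell,\rho)$ intersects $\lambda$, at least one of these points lies in $H(\ell,\rho)$.
   Context: The hippodrome $H(\ell,\rho)$ of a segment $\ell$ is the set of points of the plane at Euclidean distance at most $\rho$ from some point of $\ell$. *)

(* Defs.v *)
From Stdlib Require Import Reals List.
Open Scope R_scope.

Definition point := (R * R)%type.

Definition edist (p q : point) : R :=
  sqrt ((fst p - fst q)^2 + (snd p - snd q)^2).

Definition on_segment (a b z : point) : Prop :=
  exists s : R, 0 <= s <= 1 /\
    z = ((1 - s) * fst a + s * fst b, (1 - s) * snd a + s * snd b).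

Definition in_hippodrome (a b : point) (rho : R) (z : point) : Prop :=
  exists w : point, on_segment a b w /\ edist z w <= rho.

Definition axis_parallel (a b : point) : Prop :=
  fst a = fst b \/ snd a = snd b.

Definition in_rect (x1 x2 y1 y2 : R) (z : point) : Prop :=
  x1 <= fst z <= x2 /\ y1 <= snd z <= y2.

Definition seg_in_rect (x1 x2 y1 y2 : R) (a b : point) : Prop :=
  forall z, on_segment a b z -> in_rect x1 x2 y1 y2 z.

(* Main.v *)
Require Import Defs.
From Stdlib Require Import Reals List Lra Lia Psatz.
Open Scope R_scope.

Fixpoint pts (c rho y1 d : R) (n : nat) : list point :=
  match n with
  | O => nil
  | S k => (c - rho/2, y1 + (INR k + /2) * d) :: (c + rho/2, y1 + (INR k + /2) * d)
           :: pts c rho y1 d k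
  end.

Lemma pts_len c rho y1 d n : length (pts c rho y1 d n) = (2 * n)%nat.
Proof. induction n; simpl; [reflexivity|]. rewrite IHn. lia. Qed.

Lemma pts_in c rho y1 d n i s : (i < n)%nat -> (s = c - rho/2 \/ s = c + rho/2) ->
  In (s, y1 + (INR i + /2) * d) (pts c rho y1 d n).
Proof.
  induction n; intros Hi Hs; [lia|]. simpl.
  destruct (Nat.eq_dec i n) as [->|Hne].
  - destruct Hs as [->| ->]; auto.
  - right; right; apply IHn; auto; lia.
Qed.

Lemma find_idx (y1 d y : R) (n : nat) : 0 < d -> (1 <= n)%nat ->
  y1 <= y <= y1 + INR n * d ->
  exists i, (i < n)%nat /\ Rabs (y - (y1 + (INR i + /2) * d)) <= d/2.
Proof.
  intros Hd. induction n as [|n IH]; intros Hn Hy; [lia|].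
  destruct (Nat.eq_dec n 0) as [->|Hn0].
  - exists 0%nat. split; [lia|]. simpl in *. apply Rabs_le. lra.
  - destruct (Rle_dec y (y1 + INR n * d)) as [Hle|Hgt].
    + destruct IH as [i [Hi Ha]]; [lia|lra|]. exists i; split; [lia|exact Ha].
    + exists n. split; [lia|]. rewrite S_INR in Hy. apply Rabs_le. lra.
Qed.

Lemma sqrt_le_sq X r : 0 <= X -> 0 <= r -> sqrt X <= r -> X <= r * r.
Proof.
  intros HX Hr H. pose proof (sqrt_sqrt X HX). pose proof (sqrt_pos X). nra.
Qed.

Theorem lemma4 (x1 x2 y1 y2 rho : R) (t : nat) (c : R) :
  x1 <= x2 -> y1 < y2 -> 0 < rho ->
  INR t - 1 < (y2 - y1) / (sqrt 3 * rho) <= INR t ->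
  exists P : list point,
    length P = (2 * t)%nat /\
    forall a b : point,
      axis_parallel a b ->
      seg_in_rect x1 x2 y1 y2 a b ->
      (exists z : point, fst z = c /\ in_hippodrome a b rho z) ->
      exists p, In p P /\ in_hippodrome a b rho p.
Proof.
  intros Hx Hy Hr [Ht1 Ht2].
  assert (Hs3 : 0 < sqrt 3) by (apply sqrt_lt_R0; lra).
  assert (Hs33 : sqrt 3 * sqrt 3 = 3) by (apply sqrt_sqrt; lra).
  assert (Hq : 0 < (y2 - y1) / (sqrt 3 * rho)).
  { apply Rdiv_lt_0_compat; [lra|]. nra. }
  assert (Htpos : (1 <= t)%nat).
  { destruct t; [simpl in Ht2; lra | lia]. }
  assert (HtR : 0 < INR t) by (apply lt_0_INR; lia).
  set (d := (y2 - y1) / INR t).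
  assert (Hd : 0 < d) by (apply Rdiv_lt_0_compat; lra).
  assert (Hdt : INR t * d = y2 - y1) by (unfold d; field; lra).
  assert (Hdb : d <= sqrt 3 * rho).
  { assert (y2 - y1 <= INR t * (sqrt 3 * rho)).
    { assert (Hp : 0 < sqrt 3 * rho) by nra.
      apply Rmult_le_compat_r with (r := sqrt 3 * rho) in Ht2; [|lra].
      replace ((y2 - y1) / (sqrt 3 * rho) * (sqrt 3 * rho)) with (y2 - y1) in Ht2
        by (field; lra). exact Ht2. }
    nra. }
  exists (pts c rho y1 d t). split; [apply pts_len|].
  intros a b _ Hin [z [Hzc [w [Hw Hzw]]]].
  pose proof (Hin w Hw) as [_ Hwy].
  unfold edist in Hzw. apply sqrt_le_sq in Hzw; [|apply Rplus_le_le_0_compat; apply pow2_ge_0|lra].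
  assert (Hwx : (fst z - fst w)^2 <= rho * rho) by (pose proof (pow2_ge_0 (snd z - snd w)); lra).
  destruct (find_idx y1 d (snd w) t Hd Htpos) as [i [Hi Hiy]]; [lra|].
  set (s := if Rle_dec c (fst w) then c + rho/2 else c - rho/2).
  assert (Hsx : (s - fst w)^2 <= rho*rho/4).
  { unfold s; destruct (Rle_dec c (fst w)); rewrite Hzc in Hwx; nra. }
  exists (s, y1 + (INR i + /2) * d). split.
  - apply pts_in; auto. unfold s; destruct (Rle_dec c (fst w)); auto.
  - exists w. split; [exact Hw|]. unfold edist. simpl.
    rewrite <- (sqrt_square rho) by lra. apply sqrt_le_1_alt.
    pose proof (Rle_abs (snd w - (y1 + (INR i + / 2) * d))); pose proof (Rabs_Ropp (snd w - (y1 + (INR i + / 2) * d))); pose proof (Rle_abs (- (snd w - (y1 + (INR i + / 2) * d)))).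
    assert ((y1 + (INR i + /2) * d - snd w)^2 <= d*d/4) by nra.
    assert (d * d <= 3 * (rho * rho)) by nra.
    nra.
Qed.
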